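(* There is an instance of DCIC (for any $c_{\mathrm{Del}}\ge0$) in which every single-proposal mechanism with inspection has value at most $0$ while $\mathbb E[\mathrm{Opt}]\ge 1/2$; hence no such mechanism is $\beta$-approximate for any $\beta>0$. Concretely: each $X_i$ equals $1$ with probability $1/2$ and $0$ with probability $1/2$, and $c_i=1$ for all $i$.
   Context: Delegated choice with inspection cost (DCIC). There are $n$ alternatives indexed by $[n]=\{1,\dots,n\}$. Each alternative $i$ has a principal's utility $X_i\ge 0$ and an agent's utility $Y_i\ge 0$; the pairs $(X_i,Y_i)$, $i\in[n]$, are mutually independent random vectors (with $X_i$ and $Y_i$ possibly dependent), $X_i\sim D^X_i$, $Y_i\sim D^Y_i$. The principal knows the distributions $D^X_i$ but not the $D^Y_i$. Alternative $i$ has a deterministic inspection cost $c_i\ge 0$; delegating costs the principal $c_{\mathrm{Del}}\ge 0$. An inspection policy is a deterministic adaptive procedure which at each step, based on the already inspected alternatives and their revealed values $X_j$ (and on the agent's signal, if any), either inspects a not-yet-inspected alternative $i$ (paying $c_i$ and learning $X_i$), or selects one alternative $i$ (inspected or not) and stops, or stops selecting nothing. A (deterministic) mechanism either does not delegate and runs an inspection policy, or delegates: it pays $c_{\mathrm{Del}}$, fixes a signal set $\Sigma$ and a map $\mathrm{Sig}$ from $\Sigma$ to inspection policies; the agent observes all realizations $(X_i,Y_i)_{i\in[n]}$ and sends a signal $\sigma\in\Sigma$ maximizing his utility ($Y_k$ if alternative $k$ is finally selected by $\mathrm{Sig}(\sigma)$, $0$ if none is selected), breaking ties in favor of the principal (among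 signals giving him equal utility he sends one maximizing the principal's realized utility); the principal then runs $\mathrm{Sig}(\sigma)$. With $\mathbf A_i,\mathbf I_i\in\{0,1\}$ indicating that $i$ is selected / inspected and $\mathbf I_{\mathrm{Del}}\in\{0,1\}$ indicating delegation, the principal's realized utility is $\sum_{i}(\mathbf A_iX_i-\mathbf I_ic_i)-\mathbf I_{\mathrm{Del}}c_{\mathrm{Del}}$. The value $\mathbb E[M]$ of a mechanism $M$ is the infimum, over all agent utility distributions $(D^Y_i)_i$ (with the independence structure above), of the principal's expected realized utility. $\mathrm{Opt}$ denotes an optimal mechanism and $\mathbb E[\mathrm{Opt}]$ the supremum of $\mathbb E[M]$ over all mechanisms $M$. A single-proposal mechanism with inspection (SPMI) is a delegating mechanism with signal set $[n]\cup\{\perp\}$ in which, on signal $j\in[n]$, the principal inspects $j$ and then either selects $j$ or selects nothing according to an acceptance rule fixed in advance, and on signal $\perp$ nothing is inspected or selected. *)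

(* Defs.v *)
From HB Require Import structures.
From mathcomp Require Import all_boot all_order all_algebra.
From mathcomp Require Import all_classical all_reals all_analysis.
Set Implicit Arguments. Unset Strict Implicit. Unset Printing Implicit Defensive.
Import Order.TTheory GRing.Theory Num.Theory.
Local Open Scope classical_set_scope.
Local Open Scope ring_scope.

Section DCIC.
Variables (R : realType) (n : nat).

(** Deterministic adaptive inspection policies, as decision trees:
    [Inspect i k] inspects alternative [i] (paying [c_i]) and continues with
    [k x] where [x] is the revealed value [X_i];
    [Select i] selects alternative [i] (inspected or not) and stops;
    [Stop] stops selecting nothing. *)
Inductive policy : Type :=
| Inspect of 'I_n & (R -> policy)
| Select of 'I_n
| Stop.

Fixpoint wf_policy (S : {set 'I_n}) (p : policy) : Prop :=
  match p with
  | Inspect i k => i \notin S /\ forall x, wf_policy (i |: S) (k x)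
  | Select _ => True
  | Stop => True
  end.

Fixpoint run (p : policy) (x : 'I_n -> R) : option 'I_n * seq 'I_n :=
  match p with
  | Inspect i k => let: (s, l) := run (k (x i)) x in (s, i :: l)
  | Select i => (Some i, [::])
  | Stop => (None, [::])
  end.

Definition principal_util (c : 'I_n -> R) (p : policy) (x : 'I_n -> R) : R :=
  let: (s, l) := run p x in
  (match s with Some k => x k | None => 0 end) - \sum_(i <- l) c i.

Definition agent_util (p : policy) (x y : 'I_n -> R) : R :=
  match (run p x).1 with Some k => y k | None => 0 end.

Inductive mechanism : Type :=
| NoDelegate of policy
| Delegate (Sigma : Type) of (Sigma -> policy).

Definition wf_mechanism (M : mechanism) : Prop :=
  match M with
  | NoDelegate p => wf_policy (@finset.set0 _) p
  | Delegate Sigma Sig => inhabited Sigma /\ forall s, wf_policy (@finset.set0 _) (Sig s)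
  end.

(** When delegating, the agent sends a
    signal maximizing his utility, breaking ties in favour of the principal,
    i.e. the principal gets the maximum of her realized utility over the
    agent-optimal signals (this maximum exists since the agent's and the
    principal's utilities take finitely many values). *)
Definition realized_util (c : 'I_n -> R) (cDel : R) (M : mechanism)
    (x y : 'I_n -> R) : \bar R :=
  match M with
  | NoDelegate p => (principal_util c p x)%:E
  | Delegate Sigma Sig =>
      (ereal_sup [set (principal_util c (Sig s) x)%:E | s in
         [set s | forall s', (agent_util (Sig s') x y <= agent_util (Sig s) x y)%R]]
       - cDel%:E)%E
  end.

(** Admissible joint realizations: a probability space carrying random
    vectors [(X_i, Y_i)], with [X_i ~ DX_i], [Y_i >= 0], and the pairs
    [(X_i,Y_i)] mutually independent (product rule on measurable
    rectangles, which generate the product sigma-algebra). *)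
Definition admissible (DX : 'I_n -> set R -> \bar R)
    (d : measure_display) (Omega : measurableType d)
    (P : probability Omega R) (X Y : 'I_n -> Omega -> R) : Prop :=
  [/\ forall i, measurable_fun setT (X i),
      forall i, measurable_fun setT (Y i),
      forall i A, measurable A -> P (X i @^-1` A) = DX i A,
      forall i w, 0 <= Y i w &
      forall A B : 'I_n -> set R,
        (forall i, measurable (A i)) -> (forall i, measurable (B i)) ->
        P (\bigcap_(i in [set: 'I_n]) (X i @^-1` A i `&` Y i @^-1` B i)) =
        (\big[*%E/1%E]_(i < n) P (X i @^-1` A i `&` Y i @^-1` B i))%E].

(** Value of a mechanism: infimum over all agent utility distributions
    of the principal's expected realized utility. *)
Definition mech_value (DX : 'I_n -> set R -> \bar R) (c : 'I_n -> R) (cDel : R)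
    (M : mechanism) : \bar R :=
  ereal_inf [set e | exists (d : measure_display) (Omega : measurableType d)
      (P : probability Omega R) (X Y : 'I_n -> Omega -> R),
      admissible DX P X Y /\
      e = (\int[P]_w realized_util c cDel M (fun i => X i w) (fun i => Y i w))%E].

Definition opt_value (DX : 'I_n -> set R -> \bar R) (c : 'I_n -> R) (cDel : R)
    : \bar R :=
  ereal_sup [set e | exists M : mechanism,
    wf_mechanism M /\ e = mech_value DX c cDel M].

(** Single-proposal mechanism with inspection, with acceptance rule [acc]:
    signal set [[n] + {bot}] (here [option 'I_n], [None] = bot); on signal
    [j] inspect [j] and select it iff [acc j X_j]; on bot do nothing. *)
Definition spmi (acc : 'I_n -> R -> bool) : mechanism :=
  @Delegate (option 'I_n) (fun s => match s with
    | Some j => Inspect j (fun v => if acc j v then Select j else Stop)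
    | None => Stop end).

Definition beta_approx (beta : R) (DX : 'I_n -> set R -> \bar R) (c : 'I_n -> R)
    (cDel : R) (M : mechanism) : Prop :=
  (beta%:E * opt_value DX c cDel <= mech_value DX c cDel M)%E.

End DCIC.

Definition half_bernoulli (R : realType) (n : nat) : 'I_n -> set R -> \bar R :=
  fun _ A => ((2^-1)%:E * \d_(0%R:R) A + (2^-1)%:E * \d_(1%R:R) A)%E.

(* Main.v *)
Require Import Defs.
From HB Require Import structures.
From mathcomp Require Import all_boot all_order all_algebra.
From mathcomp Require Import all_classical all_reals all_analysis.
From mathcomp Require Import measurable_realfun.
Import Order.TTheory GRing.Theory Num.Theory.
Local Open Scope classical_set_scope.
Local Open Scope ring_scope.

Definition Om (n : nat) := {ffun 'I_n -> bool}.
HB.instance Definition _ n := Finite.on (Om n).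
HB.instance Definition _ n := isPointed.Build (Om n) [ffun=> false].
HB.instance Definition _ n := @isMeasurable.Build default_measure_display
  (Om n) discrete_measurable discrete_measurable0
  discrete_measurableC discrete_measurableU.

Section S.
Variables (R : realType) (n : nat).
Definition enOm : seq (Om n) := enum (Om n).
Definition om0 : Om n := [ffun=> false].
Definition dm (k : nat) : {measure set (Om n) -> \bar R} := @dirac _ (Om n) (nth om0 enOm k) R.
Definition cn : {nonneg R} := ((2^-1)^+n)%:nng.
Definition Pr0 := mscale cn (msum dm #|Om n|).

Lemma Pr0E (A : set (Om n)) :
  Pr0 A = (cn%:num * \sum_(f : Om n) (f \in A)%:R)%:E.
Proof.
rewrite /Pr0 /mscale /=; unfold msum; rewrite /dm /=.
under eq_bigr do rewrite diracE.
rewrite sumEFin -EFinM; congr (_ * _)%:E.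
rewrite cardE -/enOm -(big_mkord xpredT (fun k => (nth om0 enOm k \in A)%:R)).
rewrite -(big_nth om0 xpredT (fun f => (f \in A)%:R)).
by rewrite /enOm big_enum.
Qed.

Lemma Pr0_setT : Pr0 setT = 1%E.
Proof.
rewrite Pr0E; congr (_%:E).
under eq_bigr do rewrite in_setT.
rewrite sumr_const card_ffun card_bool card_ord /=.
by rewrite mulr1n natrX -exprMn mulVf ?expr1n // pnatr_eq0.
Qed.

HB.instance Definition _ := Measure.on Pr0.
HB.instance Definition _ := Measure_isProbability.Build _ _ _ Pr0 Pr0_setT.

Lemma Pr0_prod (T : 'I_n -> pred bool) :
  Pr0 [set f | forall i, T i (f i)] =
  (\prod_i (((T i true)%:R + (T i false)%:R) / 2))%:E.
Proof.
rewrite Pr0E; congr (_%:E).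
have -> : \sum_(f : Om n) (f \in [set f : Om n | forall i, T i (f i)])%:R =
  \sum_(f : {ffun 'I_n -> bool}) \prod_i ((T i (f i))%:R : R).
  apply: eq_bigr => f _.
  have [H|H] := pselect (forall i, T i (f i)).
    rewrite mem_set //= big1 // => i _; by rewrite H.
  have -> : (f \in [set f : Om n | forall i, T i (f i)]) = false.
    by apply/negbTE/negP; rewrite in_setE.
  have [i Hi] : exists i, ~~ T i (f i).
    by apply: contra_notP H => H i; apply/negPn/negP => Hn; apply: H; exists i.
  by rewrite (bigD1 i) //= (negbTE Hi) mul0r.
rewrite -(bigA_distr_bigA (fun i b => ((T i b)%:R : R))) /= big_split /= mulrC prodr_const card_ord.
congr (_ * _); apply: eq_bigr => i _; by rewrite big_bool.
Qed.

Lemma Pr0_one (i : 'I_n) (p : pred bool) :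
  Pr0 [set f | p (f i)] = (((p true)%:R + (p false)%:R) / 2)%:E.
Proof.
transitivity (Pr0 [set f | forall j, (if j == i then p else predT) (f j)]).
  congr (Pr0 _); apply/seteqP; split => f /=.
    by move=> H j; case: eqP => // ->.
  by move=> /(_ i); rewrite eqxx.
apply: eq_trans (Pr0_prod (fun j => if j == i then p else predT)) _.
rewrite (bigD1 i) //= eqxx big1 ?mulr1 // => j /negbTE -> /=.
by rewrite divff // pnatr_eq0.
Qed.

Definition Xv (i : 'I_n) (f : Om n) : R := if f i then 1 else 0.
Definition Yv (i : 'I_n) (f : Om n) : R := 0.

Lemma adm : admissible (@half_bernoulli R n) Pr0 Xv Yv.
Proof.
split.
- by move=> i _ B _.
- by move=> i _ B _.
- move=> i A _.
  transitivity (Pr0 [set f | (fun b => (if b then 1 else 0 : R) \in A) (f i)]).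
    by congr (Pr0 _); apply/seteqP; split => f /=; rewrite /Xv in_setE.
  apply: eq_trans (Pr0_one i (fun b => (if b then 1 else 0 : R) \in A)) _.
  rewrite /half_bernoulli !diracE /=.
  rewrite -!EFinM -EFinD; congr (_%:E).
  by rewrite mulrDl addrC; congr (_ + _); apply: mulrC.
- by [].
- move=> A B _ _.
  pose T i (b : bool) := ((if b then 1 else 0 : R) \in A i) && (0 \in B i).
  transitivity (Pr0 [set f | forall i, T i (f i)]).
    congr (Pr0 _); apply/seteqP; split => f /=.
      move=> H i; have [H1 H2] := H i I.
      by rewrite /T; apply/andP; split; rewrite in_setE.
    move=> H i _; have /andP[H1 H2] := H i.
    by split; rewrite /= -in_setE.
  apply: eq_trans (Pr0_prod T) _.
  rewrite -prodEFin; apply: eq_bigr => i _.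
  transitivity (Pr0 [set f | T i (f i)]); last first.
    congr (Pr0 _); apply/seteqP; split => f /=.
      move=> /andP[H1 H2]; by split; rewrite /= -in_setE.
    move=> [H1 H2]; by apply/andP; split; rewrite in_setE.
  by rewrite (Pr0_one i (T i)).
Qed.
End S.

Lemma spmi_util_le0 (R : realType) (n : nat) (acc : 'I_n -> R -> bool)
  (j : 'I_n) (x : 'I_n -> R) : x j <= 1 ->
  principal_util (fun _ => 1) (@Inspect R n j (fun v => if acc j v then @Select R n j else @Stop R n)) x <= 0.
Proof.
move=> xj1; rewrite /principal_util /=.
case: (acc j (x j)) => /=; rewrite big_cons big_nil addr0 subr_le0 //.
Qed.

Theorem mainTheorem11 (R : realType) (n : nat) (cDel : R) :
  (0 < n)%N -> 0 <= cDel ->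
  let DX := @half_bernoulli R n in
  let c := fun _ : 'I_n => (1 : R) in
  [/\ (forall acc : 'I_n -> R -> bool, (mech_value DX c cDel (spmi acc) <= 0)%E),
      ((2^-1 : R)%:E <= opt_value DX c cDel)%E &
      (forall (beta : R), 0 < beta ->
         forall acc : 'I_n -> R -> bool, ~ beta_approx beta DX c cDel (spmi acc))].
Proof.
move=> n0 cDel0 DX c.
have H1 : forall acc : 'I_n -> R -> bool, (mech_value DX c cDel (spmi acc) <= 0)%E.
  move=> acc.
  apply: (@le_trans _ _ ((- cDel)%:E)); last by rewrite lee_fin oppr_le0.
  apply: ereal_inf_lbound.
  exists default_measure_display, (Om n), (Pr0 R n), (@Xv R n), (@Yv R n).
  split; first exact: adm.
  transitivity (\int[Pr0 R n]_w (cst ((- cDel)%:E) w))%E; last first.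
    apply: eq_integral => w _.
    rewrite /realized_util /spmi.
    set S := ereal_sup _.
    have -> : S = 0%E.
      apply/le_anti/andP; split.
        apply: ge_ereal_sup => _ [s _ <-]; case: s => [j|] /=; rewrite lee_fin.
          apply: spmi_util_le0; rewrite /Xv; case: (w j) => //; exact: ler01.
        by rewrite /principal_util /= big_nil subr0.
      apply: ereal_sup_ubound; exists None.
        move=> s' /=; rewrite /agent_util /Yv.
        by case: (run _ _).1 => [k|]; case: (run _ _).1 => [k'|].
      by rewrite /principal_util /= big_nil subr0.
    by rewrite sub0e.
  rewrite integral_cst // (_ : _ [set: _] = 1%E) ?mule1 //; exact: Pr0_setT.
have H2 : ((2^-1 : R)%:E <= opt_value DX c cDel)%E.
  pose i0 : 'I_n := Ordinal n0.
  apply: (@le_trans _ _ (mech_value DX c cDel (NoDelegate (@Select R n i0)))); last first.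
    by apply: ereal_sup_ubound; exists (NoDelegate (@Select R n i0)); split.
  apply: le_ereal_inf_tmp => _ [d [Om' [P [X [Y [[mX mY hX hY hI] ->]]]]]].
  rewrite (eq_integral (fun w => (X i0 w)%:E)); last first.
    by move=> w _; rewrite /realized_util /principal_util /= big_nil subr0.
  set E1 := X i0 @^-1` [set 1].
  have mE1 : measurable E1.
    by have := mX i0 measurableT [set 1] (measurable_set1 1); rewrite setTI.
  have n01 : ((0:R) \in [set (1:R)]) = false.
    by apply/negbTE/negP; rewrite in_setE /= => /eqP; rewrite eq_sym oner_eq0.
  have n11 : ((1:R) \in [set (1:R)]) = true by apply: mem_set.
  rewrite (ae_eq_integral (fun w => (\1_E1 w)%:E)) //.
  - rewrite integral_indic // setIT /E1.
    have HP := hX i0 [set 1] (measurable_set1 _).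
    rewrite -[X in (_ <= X)%E]/(Probability.sort P (X i0 @^-1` [set 1])) HP.
    rewrite /DX /half_bernoulli !diracE n01 n11.
    by rewrite mule0 add0e mule1.
  - exact/measurable_EFinP.
  - by apply/measurable_EFinP; exact: measurable_indic.
  - rewrite /ae_eq.
    have mS : measurable (~` ([set (0:R)] `|` [set 1])).
      by apply: measurableC; apply: measurableU; exact: measurable_set1.
    have mN : measurable (X i0 @^-1` (~` ([set 0] `|` [set 1]))).
      have := mX i0 measurableT _ mS.
      by rewrite setTI.
    exists (X i0 @^-1` (~` ([set 0] `|` [set 1]))); split => //.
      have HN := hX i0 _ mS.
      apply: eq_trans HN _.
      have z0 : ((0:R) \in ~` ([set 0] `|` [set 1])) = false.
        by apply/negbTE/negP; rewrite in_setE /= => H; apply: H; left.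
      have z1 : ((1:R) \in ~` ([set 0] `|` [set 1])) = false.
        by apply/negbTE/negP; rewrite in_setE /= => H; apply: H; right.
      by rewrite /DX /half_bernoulli !diracE z0 z1 !mule0 adde0.
    move=> w /= Hw [H0|H1']; apply: Hw => _; rewrite indicE.
      have nE : ~ E1 w by rewrite /E1 /= H0 => /eqP; rewrite eq_sym oner_eq0.
      by rewrite memNset // H0.
    have E : E1 w by rewrite /E1 /= H1'.
    by rewrite mem_set // H1'.
split => // beta b0 acc.
rewrite /beta_approx => Hb.
have h1 : (0 < (beta * 2^-1)%:E)%E by rewrite lte_fin mulr_gt0 // invr_gt0 ltr0n.
have h2 : ((beta * 2^-1)%:E <= beta%:E * opt_value DX c cDel)%E.
  by rewrite EFinM lee_wpmul2l // lee_fin ltW.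
have := lt_le_trans h1 (le_trans (le_trans h2 Hb) (H1 acc)).
by rewrite ltxx.
Qed.
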